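(* Let $k$ be an integer and $l,t$ integers with $1\le l,t\le k-2\le q-2$. Let $r\in\mathbb F$ and let $X:\mathbb F\to C$ be any function. Then $$\sum_{b\in\mathbb F}\ \sum_{s\in\mathbb F,\,s\ne b}\frac{(b-r)^t}{(s-b)^l}X(s)=\begin{cases}\sum_{s\in\mathbb F}(-1)^{l+1}\binom{t}{l}(s-r)^{t-l}X(s)&\text{if } t>l,\\ \sum_{s\in\mathbb F}(-1)^{l+1}X(s)&\text{if } t=l,\\ 0&\text{if } t<l.\end{cases}$$
   Context: $\mathbb F$ is a finite field with $q$ elements, and $C$ is a field containing $\mathbb F$ (in the paper, the completion of an algebraic closure of $\mathbb F((1/T))$). Binomial coefficients are read in $\mathbb F$; $0^0=1$. *)

(* Defs.v *)
From HB Require Import structures.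
From mathcomp Require Import all_boot all_order all_algebra all_field.
Set Implicit Arguments. Unset Strict Implicit. Unset Printing Implicit Defensive.

(* Main.v *)
Require Import Defs.
From HB Require Import structures.
From mathcomp Require Import all_boot all_order all_algebra all_field.
From mathcomp Require Import ring zify.
Import GRing.Theory.
Local Open Scope ring_scope.

Lemma card_natr0 (F : finFieldType) : (#|F|)%:R = 0 :> F.
Proof.
have := @reindex_inj F +%R 0 F (+%R 1) predT id (addrI 1).
rewrite big_split /= sumr_const cardT -cardE.
set S := \sum_(i : F) i.
move=> /eqP; rewrite -subr_eq0 opprD addrCA addrN addr0 oppr_eq0 => /eqP //.
Qed.

Lemma sum_nz_one (F : finFieldType) : \sum_(u : F | u != 0) 1 = -1 :> F.
Proof.
rewrite sumr_const.
have -> : #|[pred u : F | u != 0]| = #|F|.-1 by rewrite -(cardC1 (0:F)).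
apply/eqP; rewrite -subr_eq0 opprK -mulrSr prednK ?card_natr0 //.
by apply/card_gt0P; exists 0.
Qed.

Lemma exists_nonroot (F : finFieldType) m :
  (0 < m)%N -> (m <= #|F| - 2)%N -> exists2 a : F, a != 0 & a ^+ m != 1.
Proof.
move=> m0 mq.
case: (pickP [pred a : F | (a != 0) && (a ^+ m != 1)]) => [a /andP[]|H]; first by exists a.
have := @max_unity_roots F m (enum [pred u : F | u != 0]) m0.
rewrite enum_uniq -cardE.
have -> : #|[pred u : F | u != 0]| = #|F|.-1 by rewrite -(cardC1 (0:F)).
have F0 : (0 < #|F|)%N by apply/card_gt0P; exists 0.
have -> : all (m.-unity_root) (enum [pred u : F | u != 0]).
  apply/allP => u; rewrite mem_enum inE => u0.
  apply/unity_rootP; move: (H u) => /=; rewrite u0 /=.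
  by move/negbT; rewrite negbK => /eqP.
move=> /(_ isT isT). lia.
Qed.

Lemma sum_ratio (F : finFieldType) j l :
  (j <= #|F| - 2)%N -> (l <= #|F| - 2)%N ->
  \sum_(u : F | u != 0) u ^+ j / u ^+ l = if j == l then -1 else 0.
Proof.
move=> jq lq.
case: eqP => [<-|/eqP jl].
  rewrite -sum_nz_one; by apply: eq_bigr => u u0; rewrite divff //; apply: expf_neq0.
have [a a0 aj] : exists2 a : F, a != 0 & a ^+ j / a ^+ l != 1.
  have an (a : F) : a != 0 -> a ^+ l != 0 by move=> a0; apply: expf_neq0.
  have an' (a : F) : a != 0 -> a ^+ j != 0 by move=> a0; apply: expf_neq0.
  case: (ltngtP l j) jl => // [lj|jl'] _.
    have [a a0 am] := @exists_nonroot F (j - l) ltac:(lia) ltac:(lia).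
    by exists a => //; rewrite -expfB.
  have [a a0 am] := @exists_nonroot F (l - j) ltac:(lia) ltac:(lia).
  exists a => //; apply: contra am => /eqP e.
  by rewrite expfB // -invf_div e invr1.
set S := \sum_(u | _) _.
have : S = a ^+ j / a ^+ l * S.
  rewrite /S [LHS](reindex_inj (mulfI a0)) /= mulr_sumr; apply: eq_big => u.
    by rewrite mulf_eq0 (negbTE a0).
  by move=> _; rewrite !exprMn invfM; ring.
move/eqP; rewrite -subr_eq0 -{1}[S]mul1r -mulrBl mulf_eq0 subr_eq0 eq_sym (negbTE aj) /=.
by move/eqP.
Qed.

Lemma inner (F : finFieldType) (s r : F) t l :
  (1 <= l)%N -> (t <= #|F| - 2)%N -> (l <= #|F| - 2)%N ->
  \sum_(b | b != s) (b - r) ^+ t / (s - b) ^+ l =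
  if (l < t)%N then (-1) ^+ l.+1 * ('C(t, l))%:R * (s - r) ^+ (t - l)
  else if t == l then (-1) ^+ l.+1 else 0.
Proof.
move=> l1 tq lq.
rewrite (reindex_inj (subrI s)) /=.
transitivity (\sum_(u | u != 0) (s - r + - u) ^+ t / u ^+ l).
  apply: eq_big => u.
    by rewrite -subr_eq0 (_ : s - u - s = - u) ?oppr_eq0 //; ring.
  by move=> _; congr (_ ^+ _ / _ ^+ _); ring.
under eq_bigr => u _ do rewrite exprDn mulr_suml.
rewrite exchange_big /=.
transitivity (\sum_(i < t.+1) ((s - r) ^+ (t - i) * (-1) ^+ i *+ 'C(t, i)) *
                (if (i : nat) == l then -1 else 0)).
  apply: eq_bigr => i _.
  rewrite -sum_ratio //; last by have := ltn_ord i; lia.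
  rewrite mulr_sumr; apply: eq_bigr => u _.
by rewrite -(mulN1r u) exprMn !mulrnAl !mulrA.
pose G := fun j : nat => - ((s - r) ^+ (t - j) * (-1) ^+ j *+ 'C(t, j)).
rewrite (eq_bigr (fun i : 'I_t.+1 => if (i : nat) == l then G i else 0)); last first.
  by move=> i _; case: eqP => _; rewrite ?mulr0 ?mulrN1.
rewrite -big_mkcond big_ord1_eq /G.
case: (ltngtP l t) => [lt|gt|->].
- rewrite ltnS ltnW //.
  set A := (s - r) ^+ (t - l). set B := (-1) ^+ l.
  rewrite exprS -/B -mulr_natr. ring.
- by have -> : (l < t.+1)%N = false by lia.
- by rewrite ltnSn binn subnn expr0 mul1r exprS mulN1r.
Qed.

Theorem proposition8p5 (F : finFieldType) (C : fieldType)
    (iota : {rmorphism F -> C}) (k l t : nat)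
    (hl1 : (1 <= l)%N) (ht1 : (1 <= t)%N)
    (hlk : (l <= k - 2)%N) (htk : (t <= k - 2)%N) (hkq : (k - 2 <= #|F| - 2)%N)
    (r : F) (X : F -> C) :
  \sum_(b : F) \sum_(s : F | s != b)
      iota ((b - r) ^+ t / (s - b) ^+ l) * X s =
  if (l < t)%N then
    \sum_(s : F) iota ((-1) ^+ l.+1 * ('C(t, l))%:R * (s - r) ^+ (t - l)) * X s
  else if t == l then
    \sum_(s : F) iota ((-1) ^+ l.+1) * X s
  else 0.
Proof.
under eq_bigr => b _ do rewrite big_mkcond.
rewrite exchange_big /=.
transitivity (\sum_(s : F) iota (\sum_(b | b != s) (b - r) ^+ t / (s - b) ^+ l) * X s).
  apply: eq_bigr => s _.
  rewrite rmorph_sum mulr_suml [RHS]big_mkcond; apply: eq_bigr => b _.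
  by rewrite eq_sym; case: eqP.
have E s : \sum_(b | b != s) (b - r) ^+ t / (s - b) ^+ l =
  if (l < t)%N then (-1) ^+ l.+1 * ('C(t, l))%:R * (s - r) ^+ (t - l)
  else if t == l then (-1) ^+ l.+1 else 0.
  by apply: inner; lia.
case: ltnP => h1.
  by apply: eq_bigr => s _; rewrite E h1.
case: eqP => h2.
  by apply: eq_bigr => s _; rewrite E ltnNge h1 /= h2 eqxx.
apply: big1 => s _; rewrite E ltnNge h1 /=.
by move/eqP/negbTE: h2 => ->; rewrite rmorph0 mul0r.
Qed.
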